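(* For each $n\geq1$, $x-1$ divides $H_{1,n}(x,y)$ and $(x-1)^2$ divides $H_{0,n}(x,y)$ in $\mathbb{Z}[x,y]$.
   Context: Graphs are finite. For a graph $G$, a spanning subgraph $A$ has vertex set $V(G)$ and edge set $E(A)\subseteq E(G)$; $k(A)$ is its number of components, $r(A)=|V(G)|-k(A)$, $n(A)=|E(A)|-r(A)$; the weight of $A$ is $(x-1)^{r(G)-r(A)}(y-1)^{n(A)}$. The graphs $\Sigma_n$ ($n\ge1$; Schreier graphs of the Hanoi Towers group $H^{(3)}$ with loops removed) each have three outmost vertices top, left, right: $\Sigma_1$ is the triangle $K_3$; $\Sigma_{n+1}$ is the disjoint union of three copies $G_1,G_2,G_3$ of $\Sigma_n$ together with three new edges joining left$(G_1)$ to top$(G_2)$, right$(G_1)$ to top$(G_3)$, and right$(G_2)$ to left$(G_3)$; its outmost vertices are top$(G_1)$, left$(G_2)$, right$(G_3)$. $H_{1,n}$ is the sum of the weights (with $G=\Sigma_n$) of the spanning subgraphs of $\Sigma_n$ in which the left and right outmost vertices lie in one component and the top one in another; $H_{0,n}$ is the sum over spanning subgraphs in which the three outmost vertices lie in three distinct components. *)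

(* Defs.v *)
(* Z[x,y] is represented as {poly {poly int}}:
   x = 'X%:P (inner variable, constant in y), y = 'X (outer variable). *)
From HB Require Import structures.
From mathcomp Require Import all_boot all_order all_algebra.
Set Implicit Arguments. Unset Strict Implicit. Unset Printing Implicit Defensive.
Import GRing.Theory.

(* Vertices of Sigma_n: words of length n over {0,1,2}; the first letter
   records in which copy G_1 (0), G_2 (1), G_3 (2) of Sigma_(n-1) the vertex lies.
   Adjacency: u = i::u', v = j::v' are adjacent iff either i = j and u',v'
   are adjacent (edge inside a copy), or i <> j and u' = j^(n-1), v' = i^(n-1)
   (the three connecting edges left(G1)-top(G2), right(G1)-top(G3),
   right(G2)-left(G3), with top = 0^m, left = 1^m, right = 2^m). *)
Fixpoint hadj (u v : seq 'I_3) : bool :=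
  match u, v with
  | i :: u', j :: v' =>
      if i == j then hadj u' v'
      else [&& u' == nseq (size u') j, v' == nseq (size v') i
             & size u' == size v']
  | _, _ => false
  end.

Definition vtx (n : nat) := (n.-tuple 'I_3)%type.

Definition sigma_adj (n : nat) : rel (vtx n) := fun u v => hadj u v.

Definition sigma_E (n : nat) : {set vtx n * vtx n} :=
  [set p | sigma_adj p.1 p.2 && (enum_rank p.1 < enum_rank p.2)%N].

Definition sub_rel (n : nat) (A : {set vtx n * vtx n}) : rel (vtx n) :=
  fun u v => ((u, v) \in A) || ((v, u) \in A).

Definition ncomp (n : nat) (A : {set vtx n * vtx n}) : nat :=
  n_comp (connect (sub_rel A)) (@predT (vtx n)).

(* r(A) = |V| - k(A),  n(A) = |A| - r(A)  (both are nonnegative). *)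
Definition rk (n : nat) (A : {set vtx n * vtx n}) : nat := (#|[set: vtx n]| - ncomp A)%N.
Definition nul (n : nat) (A : {set vtx n * vtx n}) : nat := (#|A| - rk A)%N.

Definition PX : {poly {poly int}} := ('X)%:P.
Definition PY : {poly {poly int}} := 'X.

Definition weight (n : nat) (A : {set vtx n * vtx n}) : {poly {poly int}} :=
  ((PX - 1) ^+ (rk (sigma_E n) - rk A) * (PY - 1) ^+ (nul A))%R.

Definition top (n : nat) : vtx n := nseq_tuple n (@Ordinal 3 0 isT).
Definition lft (n : nat) : vtx n := nseq_tuple n (@Ordinal 3 1 isT).
Definition rgt (n : nat) : vtx n := nseq_tuple n (@Ordinal 3 2 isT).

Definition H1 (n : nat) : {poly {poly int}} :=
  (\sum_(A : {set vtx n * vtx n} |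
          [&& A \subset sigma_E n,
              connect (sub_rel A) (lft n) (rgt n)
            & ~~ connect (sub_rel A) (top n) (lft n)]) weight A)%R.

Definition H0 (n : nat) : {poly {poly int}} :=
  (\sum_(A : {set vtx n * vtx n} |
          [&& A \subset sigma_E n,
              ~~ connect (sub_rel A) (top n) (lft n),
              ~~ connect (sub_rel A) (top n) (rgt n)
            & ~~ connect (sub_rel A) (lft n) (rgt n)]) weight A)%R.

(* Main.v *)
From Stdlib Require Import Lia.
Require Import Defs.
From HB Require Import structures.
From mathcomp Require Import all_boot all_order all_algebra.
Import GRing.Theory.

Notation groot := fingraph.root.
Section Gap.
Variables (T : finType) (e1 e2 : rel T).
Hypotheses (sym1 : connect_sym e1) (sym2 : connect_sym e2)
  (sub : subrel e1 (connect e2)).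

Lemma gap (B : {set T}) b0 :
  B \subset [set x | roots e1 x] -> b0 \in B ->
  {in B, forall b, connect e2 b b0} ->
  #|[set x | roots e2 x]| + #|B| <= #|[set x | roots e1 x]| + 1.
Proof.
move=> sB b0B cB.
set RA := [set x | roots e1 x]; set RB := [set x | roots e2 x].
have s1 : RB \subset (groot e2) @: (b0 |: (RA :\: B)).
  apply/subsetP=> y; rewrite inE => /eqP ry.
  have ce : connect e2 (groot e1 y) y.
    apply: (connect_sub sub); rewrite sym1; exact: connect_root.
  have gy : groot e2 (groot e1 y) = y . rewrite -[RHS]ry. exact/(fingraph.rootP sym2).
  rewrite -gy.
  case: (boolP (groot e1 y \in B)) => hB.
    have -> : groot e2 (groot e1 y) = groot e2 b0 by apply/(fingraph.rootP sym2) => //; apply: cB.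
    by apply: imset_f; rewrite setU11.
  apply: imset_f; rewrite !inE hB /= (fingraph.roots_root sym1); exact: orbT.
have := subset_leq_card s1; move/leq_trans/(_ (leq_imset_card _ _)).
rewrite cardsU1 cardsD (setIidPr sB) => h.
have hB : #|B| <= #|RA| by apply: subset_leq_card.
rewrite -(leq_add2r #|B|) in h.
apply: (leq_trans h); rewrite -addnA subnK // addnC leq_add2l; by case: (b0 \notin _).
Qed.
End Gap.
Arguments gap {T e1 e2}.
Lemma hadj_sym u v : hadj u v = hadj v u.
Proof.
elim: u v => [|i u IH] [|j v] //=.
rewrite eq_sym; case: (j == i); first exact: IH.
by rewrite andbCA [size v == _]eq_sym.
Qed.

Lemma hadj_irr u : hadj u u = false.
Proof. by elim: u => //= i u IH; rewrite eqxx. Qed.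

Lemma subE n (u v : vtx n) : sub_rel (sigma_E n) u v = hadj u v.
Proof.
rewrite /sub_rel /sigma_E !inE /= /sigma_adj.
case: (eqVneq u v) => [->|huv]; first by rewrite hadj_irr.
rewrite [hadj v u]hadj_sym.
have ne : enum_rank u != enum_rank v by apply: contra huv => /eqP/enum_rank_inj ->.
case: ltngtP => h /=; first by rewrite andbT andbF orbF.
  by rewrite andbT andbF.
by move: ne; rewrite (val_inj h) eqxx.
Qed.

Lemma lift_conn n (i : 'I_3) (u v : vtx n) : connect (@sigma_adj n) u v ->
  connect (@sigma_adj n.+1) (cons_tuple i u) (cons_tuple i v).
Proof.
move/connectP=> [p pp ->]; elim: p u pp => [|w p IH] u /=; first by move=> _; exact: connect0.
move/andP=> [h pp]; apply: connect_trans (IH _ pp); apply: connect1.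
by rewrite /sigma_adj /= eqxx.
Qed.

Lemma conn_out n (c d : 'I_3) :
  connect (@sigma_adj n) (nseq_tuple n c) (nseq_tuple n d).
Proof.
elim: n c d => [|n IH] c d.
  apply: eq_connect0; change (nseq_tuple 0 c = nseq_tuple 0 d :> 0.-tuple _); exact: val_inj.
have E : forall c : 'I_3, nseq_tuple n.+1 c = cons_tuple c (nseq_tuple n c).
  by move=> c0; apply: val_inj.
rewrite !E; case: (eqVneq c d) => [->|cd]; first exact: connect0.
apply: connect_trans (@lift_conn _ c _ _ (IH c d)) _.
apply: connect_trans _ (@lift_conn _ d _ _ (IH c d)).
apply: connect1; rewrite /sigma_adj /= (negbTE cd) !size_nseq !eqxx //.
Qed.

Lemma connectcc (T : finType) (r : rel T) : connect (connect r) =2 connect r.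
Proof.
move=> x y; apply/idP/idP; first exact: connect_sub.
by apply: connect_sub => a b h; apply: connect1; apply: connect1.
Qed.

Lemma sym_sub n (A : {set vtx n * vtx n}) : connect_sym (connect (sub_rel A)).
Proof.
move=> x y; rewrite !connectcc; apply: sym_connect_sym => a b.
by rewrite /sub_rel orbC.
Qed.

Lemma connE n u v : connect (sub_rel (sigma_E n)) u v = connect (@sigma_adj n) u v.
Proof. by apply: eq_connect => a b; rewrite subE. Qed.

Lemma ncompE n (A : {set vtx n * vtx n}) :
  ncomp A = #|[set x | roots (connect (sub_rel A)) x]|.
Proof. by rewrite /ncomp cardsE; apply: eq_card => x; rewrite !inE andbT. Qed.

Arguments ncompE {n}.
Lemma ncomp_le n (A : {set vtx n * vtx n}) : ncomp A <= #|[set: vtx n]|.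
Proof. by rewrite ncompE; apply: subset_leq_card; apply: subsetT. Qed.

Lemma sub_mono n (A : {set vtx n * vtx n}) : A \subset sigma_E n ->
  subrel (connect (sub_rel A)) (connect (connect (sub_rel (sigma_E n)))).
Proof.
move=> sA x y; rewrite connectcc; apply: connect_sub => a b.
rewrite /sub_rel => /orP[] h; apply: connect1; rewrite /sub_rel (subsetP sA _ h) ?orbT //.
Qed.

Arguments sym_sub {n}.
Arguments ncomp_le {n}.
Arguments sub_mono {n A}.
Lemma root_conn n (A : {set vtx n * vtx n}) x : A \subset sigma_E n ->
  connect (sub_rel (sigma_E n)) (groot (connect (sub_rel A)) x) x.
Proof.
move=> sA.
have h : connect (sub_rel A) (groot (connect (sub_rel A)) x) x.
  by rewrite -connectcc sym_sub; exact: connect_root.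
by move: (sub_mono sA _ _ h); rewrite connectcc.
Qed.

Lemma root_neq n (A : {set vtx n * vtx n}) x y : ~~ connect (sub_rel A) x y ->
  groot (connect (sub_rel A)) x != groot (connect (sub_rel A)) y.
Proof.
apply: contra => /eqP h; by rewrite -connectcc -(fingraph.root_connect (sym_sub A)) h.
Qed.

Lemma roots_in n (A : {set vtx n * vtx n}) x :
  groot (connect (sub_rel A)) x \in [set z | roots (connect (sub_rel A)) z].
Proof. by rewrite inE; apply: (fingraph.roots_root (sym_sub A)). Qed.

Lemma outc n (a b : 'I_3) :
  connect (sub_rel (sigma_E n)) (nseq_tuple n a) (nseq_tuple n b).
Proof. by rewrite connE; apply: conn_out. Qed.

Lemma symE n : connect_sym (sub_rel (sigma_E n)).
Proof. by apply: sym_connect_sym => a b; rewrite /sub_rel orbC. Qed.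

Lemma exp_ge n (A : {set vtx n * vtx n}) c (B : {set vtx n}) b0 :
  A \subset sigma_E n -> B \subset [set z | roots (connect (sub_rel A)) z] ->
  b0 \in B -> {in B, forall b, connect (sub_rel (sigma_E n)) b b0} ->
  c.+1 <= #|B| -> c <= rk (sigma_E n) - rk A.
Proof.
move=> sA sB b0B cB hc.
have := gap (sym_sub A) (sym_sub (sigma_E n)) (sub_mono sA) B b0 sB b0B.
move=> h.
have {h} h : ncomp (sigma_E n) + #|B| <= ncomp A + 1.
  rewrite (ncompE A) (ncompE (sigma_E n)); apply: h => b hb.
  by rewrite connectcc; apply: cB.
have hA := ncomp_le A.
rewrite /rk; move: h hA hc.
move: (ncomp (sigma_E n)) (ncomp A) #|B| #|[set: vtx n]| => x y z w.
move=> /leP h1 /leP h2 /leP h3; apply/leP; rewrite -!minusE -!plusE in h1 h2 h3 *; lia.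
Qed.

Lemma factor c (P : pred {set vtx c.+1 * vtx c.+1}) k :
  (forall A, P A -> k <= rk (sigma_E c.+1) - rk A) ->
  exists Q, (\sum_(A | P A) weight A)%R = ((PX - 1) ^+ k * Q)%R.
Proof.
move=> h; exists (\sum_(A | P A) (PX - 1) ^+ (rk (sigma_E c.+1) - rk A - k) * (PY - 1) ^+ nul A)%R.
rewrite mulr_sumr; apply: eq_bigr => A /h hk.
by rewrite /weight mulrA -exprD subnKC.
Qed.
Arguments root_conn {n A} x.
Arguments root_neq {n A x y}.
Arguments roots_in {n}.
Arguments outc {n}.
Arguments symE {n}.
Lemma rconn n (A : {set vtx n * vtx n}) x y : A \subset sigma_E n ->
  connect (sub_rel (sigma_E n)) x y ->
  connect (sub_rel (sigma_E n)) (groot (connect (sub_rel A)) x) (groot (connect (sub_rel A)) y).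
Proof.
move=> sA hxy; apply: connect_trans (root_conn x sA) _.
apply: connect_trans hxy _; rewrite symE; exact: root_conn.
Qed.

Lemma symA n (A : {set vtx n * vtx n}) x y :
  connect (sub_rel A) x y = connect (sub_rel A) y x.
Proof. by apply: sym_connect_sym => a b; rewrite /sub_rel orbC. Qed.

Theorem lemma4p5 (n : nat) (hn : (0 < n)%N) :
  (exists Q : {poly {poly int}}, H1 n = ((PX - 1) * Q)%R) /\
  (exists Q : {poly {poly int}}, H0 n = ((PX - 1) ^+ 2 * Q)%R).
Proof.
case: n hn => // c _.
set r := fun (A : {set vtx c.+1 * vtx c.+1}) x => groot (connect (sub_rel A)) x.
split.
  have := @factor c _ 1; rewrite expr1; apply => A /and3P[sA _ ntl].
  apply: (@exp_ge _ A 1 [set r A (lft c.+1); r A (top c.+1)] (r A (lft c.+1)) sA).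
  - apply/subsetP => z; rewrite !inE; case/orP => /eqP ->; apply: (fingraph.roots_root (sym_sub A)).
  - by rewrite !inE eqxx.
  - move=> b; rewrite !inE => /orP[] /eqP ->; first exact: connect0.
    by apply: rconn => //; apply: outc.
  - by rewrite cards2 root_neq // symA.
have := @factor c _ 2; apply => A /and4P[sA ntl ntr nlr].
apply: (@exp_ge _ A 2 [set r A (lft c.+1); r A (top c.+1); r A (rgt c.+1)] (r A (lft c.+1)) sA).
- by apply/subsetP => z; rewrite !inE; case/orP => [/orP[]|] /eqP ->; apply: (fingraph.roots_root (sym_sub A)).
- by rewrite !inE eqxx.
- move=> b; rewrite !inE; case/orP => [/orP[]|] /eqP ->; first exact: connect0.
    by apply: rconn => //; apply: outc.
  by apply: rconn => //; apply: outc.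
- rewrite setUC cardsU1 cards2 in_set2 negb_or.
  have h1 : r A (rgt c.+1) != r A (lft c.+1) by apply: root_neq; rewrite symA.
  have h2 : r A (rgt c.+1) != r A (top c.+1) by apply: root_neq; rewrite symA.
  have h3 : r A (lft c.+1) != r A (top c.+1) by apply: root_neq; rewrite symA.
  by rewrite h1 h2 h3.
Qed.
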